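(* Let $R$ be a ring and $n\ge 2$. Then $R$ is almost Armendariz if and only if $R[x]/\langle x^n\rangle$ is almost Armendariz.
   Context: All rings are associative with identity. For a ring $R$, $P(R)$ denotes the prime radical of $R$ (the intersection of all prime ideals of $R$, equivalently the set of strongly nilpotent elements of $R$). A ring $R$ is called almost Armendariz if whenever $f(x)=\sum_{i=0}^m a_ix^i$ and $g(x)=\sum_{j=0}^n b_jx^j\in R[x]$ satisfy $f(x)g(x)=0$, then $a_ib_j\in P(R)$ for all $0\le i\le m$, $0\le j\le n$. $\langle x^n\rangle$ is the ideal of $R[x]$ generated by $x^n$. *)

(* Defs.v *)
From HB Require Import structures.
From mathcomp Require Import all_boot all_order all_algebra.
Set Implicit Arguments. Unset Strict Implicit. Unset Printing Implicit Defensive.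
Import GRing.Theory.
Local Open Scope ring_scope.

Definition is_ideal (R : nzRingType) (I : R -> Prop) : Prop :=
  [/\ I 0,
      (forall x y, I x -> I y -> I (x - y)) &
      (forall r x, I x -> I (r * x) /\ I (x * r))].

(* prime ideal: proper two-sided ideal P such that for all ideals A, B,
   A B <= P implies A <= P or B <= P  (A B <= P iff all products a b lie in P,
   since P is an additive subgroup). *)
Definition is_prime_ideal (R : nzRingType) (P : R -> Prop) : Prop :=
  [/\ is_ideal P, ~ P 1 &
      forall A B : R -> Prop, is_ideal A -> is_ideal B ->
        (forall a b, A a -> B b -> P (a * b)) ->
        (forall a, A a -> P a) \/ (forall b, B b -> P b)].

Definition prime_radical (R : nzRingType) (x : R) : Prop :=
  forall P : R -> Prop, is_prime_ideal P -> P x.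

Definition almost_armendariz (R : nzRingType) : Prop :=
  forall f g : {poly R}, f * g = 0 ->
    forall i j : nat, prime_radical (f`_i * g`_j).

(* Carrier: polynomials of size <= N where N := n.-1.+1 (= n for n >= 1);
   product = truncation of the polynomial product below degree N.
   For n >= 1 this is exactly R[x]/<x^n> (the classes of x^k, k < n, form a
   basis); n = 0 is a junk value (like 'Z_0), excluded by the theorem. *)

Section TruncPoly.
Variables (R : nzRingType) (n : nat).
Local Notation N := n.-1.+1.

Definition trunc_poly : predArgType := npoly R N.
HB.instance Definition _ := GRing.Zmodule.on trunc_poly.

Lemma take_polyMl_aux m (a b : {poly R}) :
  take_poly m (take_poly m a * b) = take_poly m (a * b).
Proof.
rewrite -{2}(poly_take_drop m a) mulrDl take_polyD.
by rewrite -mulrA -(commr_polyXn b m) mulrA take_polyMXn_0 addr0.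
Qed.

Lemma take_polyMr_aux m (a b : {poly R}) :
  take_poly m (a * take_poly m b) = take_poly m (a * b).
Proof.
rewrite -{2}(poly_take_drop m b) mulrDr take_polyD.
by rewrite mulrA take_polyMXn_0 addr0.
Qed.

Definition tp_of (p : {poly R}) : trunc_poly :=
  NPoly (size_take_poly N p : take_poly N p \is a poly_of_size N).

Definition tp_mul (p q : trunc_poly) : trunc_poly := tp_of (val p * val q).
Definition tp_one : trunc_poly := tp_of 1.

Lemma tp_val_of p : val (tp_of p) = take_poly N p. Proof. by []. Qed.

Lemma tp_val_id (p : trunc_poly) : take_poly N (val p) = val p.
Proof. exact: take_poly_id (size_npoly p). Qed.

Fact tp_mulA : associative tp_mul.
Proof.
move=> x y z; apply: val_inj; rewrite /tp_mul /=.
by rewrite take_polyMl_aux take_polyMr_aux mulrA.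
Qed.

Fact tp_mul1l : left_id tp_one tp_mul.
Proof.
move=> x; apply: val_inj; rewrite /tp_mul /tp_one /=.
by rewrite take_polyMl_aux mul1r tp_val_id.
Qed.

Fact tp_mul1r : right_id tp_one tp_mul.
Proof.
move=> x; apply: val_inj; rewrite /tp_mul /tp_one /=.
by rewrite take_polyMr_aux mulr1 tp_val_id.
Qed.

Fact tp_mulDl : left_distributive tp_mul +%R.
Proof.
move=> x y z; apply: val_inj; rewrite /tp_mul /= /=.
by rewrite mulrDl take_polyD.
Qed.

Fact tp_mulDr : right_distributive tp_mul +%R.
Proof.
move=> x y z; apply: val_inj; rewrite /tp_mul /= /=.
by rewrite mulrDr take_polyD.
Qed.

Fact tp_one_neq0 : tp_one != 0.
Proof.
apply/eqP => /(congr1 val) /= /(congr1 (fun p : {poly R} => p`_0)).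
by rewrite coef_take_poly /= coef1 coef0 => /eqP; rewrite oner_eq0.
Qed.

HB.instance Definition _ := GRing.Zmodule_isNzRing.Build trunc_poly
  tp_mulA tp_mul1l tp_mul1r tp_mulDl tp_mulDr tp_one_neq0.

End TruncPoly.

(* Main.v *)
Require Import Defs.
From HB Require Import structures.
From mathcomp Require Import all_boot all_order all_algebra zify.
Set Implicit Arguments. Unset Strict Implicit. Unset Printing Implicit Defensive.
Import GRing.Theory.
Local Open Scope ring_scope.

Section S.
Variables (R : nzRingType) (n : nat).
Local Notation N := n.-1.+1.
Local Notation S := (trunc_poly R n).

Lemma val_mulS (s t : S) : val (s * t) = take_poly N (val s * val t).
Proof. by []. Qed.
Lemma val_oneS : val (1 : S) = take_poly N 1.
Proof. by []. Qed.
Lemma val_subS (s t : S) : val (s - t) = val s - val t.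
Proof. by []. Qed.

Definition piS (s : S) : R := (val s)`_0.
Definition cstS (r : R) : S := tp_of n r%:P.

Lemma val_cstS r : val (cstS r) = r%:P.
Proof. by rewrite tp_val_of take_poly_id // size_polyC; case: (r != 0). Qed.

Fact piS_zmod : zmod_morphism piS.
Proof. by move=> s t; rewrite /piS val_subS coefB. Qed.
Fact piS_mon : monoid_morphism piS.
Proof.
split; first by rewrite /piS val_oneS coef_take_poly /= coef1.
by move=> s t; rewrite /piS val_mulS coef_take_poly /= coef0M.
Qed.
HB.instance Definition _ := GRing.isZmodMorphism.Build S R piS piS_zmod.
HB.instance Definition _ := GRing.isMonoidMorphism.Build S R piS piS_mon.

Fact cstS_zmod : zmod_morphism cstS.
Proof. by move=> s t; apply: val_inj; rewrite val_subS !val_cstS polyCB. Qed.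
Fact cstS_mon : monoid_morphism cstS.
Proof.
split; first by apply: val_inj; rewrite val_cstS.
move=> s t; apply: val_inj; rewrite val_mulS !val_cstS -polyCM take_poly_id //.
by rewrite size_polyC; case: (_ != 0).
Qed.
HB.instance Definition _ := GRing.isZmodMorphism.Build R S cstS cstS_zmod.
HB.instance Definition _ := GRing.isMonoidMorphism.Build R S cstS cstS_mon.

Lemma piS_cst r : piS (cstS r) = r.
Proof. by rewrite /piS val_cstS coefC. Qed.



Lemma piSM s t : piS (s * t) = piS s * piS t. Proof. exact: rmorphM. Qed.
Lemma piSB s t : piS (s - t) = piS s - piS t. Proof. exact: rmorphB. Qed.
Lemma piS0 : piS 0 = 0. Proof. exact: raddf0. Qed.
Lemma piS1 : piS 1 = 1. Proof. exact: rmorph1. Qed.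
Lemma cstSM s t : cstS (s * t) = cstS s * cstS t. Proof. exact: rmorphM. Qed.
Lemma cstSB s t : cstS (s - t) = cstS s - cstS t. Proof. exact: rmorphB. Qed.
Lemma cstS0 : cstS 0 = 0. Proof. exact: raddf0. Qed.
Lemma cstS1 : cstS 1 = 1. Proof. exact: rmorph1. Qed.
Lemma ideal_add (T : nzRingType) (I : T -> Prop) : is_ideal I ->
  forall x y, I x -> I y -> I (x + y).
Proof.
case=> I0 IB _ x y Ix Iy.
have := IB x (0 - y) Ix (IB _ _ I0 Iy).
by rewrite sub0r opprK.
Qed.

Lemma prime_lift (P : R -> Prop) : is_prime_ideal P ->
  is_prime_ideal (fun s : S => P (piS s)).
Proof.
case=> [[P0 PB PM] P1 Pp]; split.
- split; first by rewrite piS0.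
  + by move=> x y; rewrite piSB; apply: PB.
  + by move=> r x; rewrite !piSM; apply: PM.
- by rewrite piS1.
move=> A B [A0 AB AM] [B0 BB BM] hAB.
pose A' r := exists s, A s /\ piS s = r.
pose B' r := exists s, B s /\ piS s = r.
have idl : forall C : S -> Prop, is_ideal C -> is_ideal (fun r => exists s, C s /\ piS s = r).
  move=> C [C0 CB CM]; split.
  - by exists 0; rewrite piS0.
  - by move=> x y [s [Cs <-]] [t [Ct <-]]; exists (s - t); rewrite piSB; split => //; apply: CB.
  - move=> r x [s [Cs <-]]; split.
    + by exists (cstS r * s); rewrite piSM piS_cst; split => //; case: (CM (cstS r) s Cs).
    + by exists (s * cstS r); rewrite piSM piS_cst; split => //; case: (CM (cstS r) s Cs).
have := Pp A' B' (idl A (And3 A0 AB AM)) (idl B (And3 B0 BB BM)).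
case.
- by move=> a b [s [As <-]] [t [Bt <-]]; rewrite -piSM; apply: hAB.
- by move=> h; left => a Aa; apply: h; exists a.
- by move=> h; right => a Aa; apply: h; exists a.
Qed.

Lemma radS_cst r : prime_radical (cstS r) -> prime_radical r.
Proof. by move=> h P hP; have := h _ (prime_lift hP); rewrite piS_cst. Qed.

Definition Jk k (s : S) := forall i, (i < k)%N -> (val s)`_i = 0.

Lemma JM a b s t : Jk a s -> Jk b t -> Jk (a + b) (s * t).
Proof.
move=> hs ht i hi; rewrite val_mulS coef_take_poly; case: ifP => // _.
rewrite coefM big1 // => j _.
have [ja|ja] := ltnP j a; first by rewrite hs // mul0r.
have hj := ltn_ord j.
by rewrite ht ?mulr0 //; lia.
Qed.

Lemma Jmono a b s : Jk a s -> (b <= a)%N -> Jk b s.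
Proof. by move=> h hb i hi; apply: h; apply: leq_trans hb. Qed.

Lemma J0 s : Jk 0 s. Proof. by []. Qed.

Lemma J_ideal k : is_ideal (Jk k).
Proof.
split.
- by move=> i _; rewrite coef0.
- by move=> x y hx hy i hi; rewrite val_subS coefB hx ?hy ?subr0.
- move=> r x hx; split.
  + by have := JM (J0 r) hx.
  + by have := JM hx (J0 r); rewrite addn0.
Qed.

Lemma JN s : Jk N s -> s = 0.
Proof.
move=> h; apply: val_inj; apply/polyP => i; rewrite coef0.
have [iN|iN] := ltnP i N; first exact: h.
by rewrite nth_default //; apply: leq_trans (size_npoly s) iN.
Qed.

Lemma J1_sub (Q : S -> Prop) : is_prime_ideal Q -> forall s, Jk 1 s -> Q s.
Proof.
case=> [hQi Q1 Qp].
suff H : forall m, (m < N)%N -> forall s, Jk (N - m) s -> Q s.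
  by move=> s hs; apply: (H n.-1) => //; rewrite subSn // subnn.
elim=> [|m IH] hm s hs.
  by rewrite (JN (Jmono hs _)) ?subn0 //; case: hQi.
have := Qp _ _ (J_ideal (N - m.+1)) (J_ideal (N - m.+1)).
case.
- move=> a b ha hb; apply: (IH (ltnW hm)).
  by apply: Jmono (JM ha hb) _; lia.
- by move=> h; apply: h.
- by move=> h; apply: h.
Qed.

Lemma J1_diff x : Jk 1 (x - cstS (piS x)).
Proof.
move=> i; rewrite ltnS leqn0 => /eqP ->.
by rewrite -/(piS _) piSB piS_cst subrr.
Qed.

Lemma prime_down (Q : S -> Prop) : is_prime_ideal Q ->
  is_prime_ideal (fun r : R => Q (cstS r)).
Proof.
move=> hQ; have hJ := J1_sub hQ.
case: hQ => [[Q0 QB QM] Q1 Qp]; split.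
- split; first by rewrite cstS0.
  + by move=> x y; rewrite cstSB; apply: QB.
  + by move=> r x; rewrite !cstSM; apply: QM.
- by rewrite cstS1.
move=> A B [A0 AB AM] [B0 BB BM] hAB.
have idl : forall C : R -> Prop, is_ideal C -> is_ideal (fun s : S => C (piS s)).
  move=> C [C0 CB CM]; split.
  - by rewrite piS0.
  - by move=> x y; rewrite piSB; apply: CB.
  - by move=> r x; rewrite !piSM; apply: CM.
have := Qp _ _ (idl A (And3 A0 AB AM)) (idl B (And3 B0 BB BM)).
case.
- move=> s t As Bt.
  have -> : s * t = (s * t - cstS (piS (s * t))) + cstS (piS s * piS t).
    by rewrite piSM subrK.
  apply: (ideal_add (And3 Q0 QB QM)); first exact: hJ (J1_diff _).
  exact: hAB.
- by move=> h; left => a Aa; have := h (cstS a); rewrite piS_cst; apply.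
- by move=> h; right => a Aa; have := h (cstS a); rewrite piS_cst; apply.
Qed.

Lemma radS_of_pi s : prime_radical (piS s) -> prime_radical s.
Proof.
move=> h Q hQ.
have hc := h _ (prime_down hQ).
have hd := J1_sub hQ (J1_diff s).
case: hQ => hI _ _.
by have := ideal_add hI hd hc; rewrite subrK.
Qed.

End S.

Theorem theorem2p1 (R : nzRingType) (n : nat) (hn : (2 <= n)%N) :
  almost_armendariz R <-> almost_armendariz (trunc_poly R n).
Proof.
split.
- move=> hR F G hFG i j.
  have := hR (map_poly (@piS R n) F) (map_poly (@piS R n) G).
  rewrite -rmorphM hFG rmorph0 => /(_ erefl i j).
  by rewrite !coef_map -rmorphM; apply: radS_of_pi.
- move=> hS f g hfg i j.
  have := hS (map_poly (@cstS R n) f) (map_poly (@cstS R n) g).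
  rewrite -rmorphM hfg rmorph0 => /(_ erefl i j).
  by rewrite !coef_map -rmorphM; apply: radS_cst.
Qed.
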